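(* If $\mathcal R$ is a polyhedral region in $\mathbb Z^k$, then either $\mathcal R$ contains arbitrarily large $k$-dimensional boxes (i.e. for every $n$ it contains a $k$-dimensional box of size $n$), or $\mathcal R$ is a set of measure zero.
   Context: A half-space is $\{\vec z\in\mathbb Z^k:\vec v\cdot\vec z>n\}$ with $\vec v\in\mathbb Z^k$, $n\in\mathbb Z$; a polyhedral region is $\mathbb Z^k$ or an intersection of finitely many half-spaces. A hyperplane is $\{\vec z\in\mathbb Z^k:\vec v\cdot\vec z=n\}$ with $\vec v\in\mathbb Z^k\setminus\{0\}$, $n\in\mathbb Z$; a set of measure zero is a subset of $\mathbb Z^k$ covered by finitely many hyperplanes. A $k$-dimensional box of size $n$ is $\{\vec z\in\mathbb Z^k: c_i\le z_i\le c_i+n,\ i=1,\dots,k\}$ for some $c_i\in\mathbb Z$. *)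

(* Defs.v *)
From mathcomp Require Import all_boot all_algebra.
Set Implicit Arguments. Unset Strict Implicit. Unset Printing Implicit Defensive.
Import GRing.Theory Num.Theory.
Local Open Scope ring_scope.

Definition pt (k : nat) := 'I_k -> int.

Definition dotz (k : nat) (v z : pt k) : int := \sum_(i < k) v i * z i.

Definition halfspace (k : nat) (v : pt k) (n : int) : pt k -> Prop :=
  fun z => n < dotz v z.

Definition hyperplane (k : nat) (v : pt k) (n : int) : pt k -> Prop :=
  fun z => dotz v z = n.

(* A polyhedral region: Z^k or an intersection of finitely many half-spaces.
   Given by a finite family (v_j, n_j), j < m; m = 0 gives Z^k. *)
Definition polyhedral (k : nat) (R : pt k -> Prop) : Prop :=
  (forall z, R z) \/
  exists (m : nat) (v : 'I_m -> pt k) (b : 'I_m -> int),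
    forall z, R z <-> (forall j, halfspace (v j) (b j) z).

Definition measure_zero (k : nat) (S : pt k -> Prop) : Prop :=
  exists (m : nat) (v : 'I_m -> pt k) (b : 'I_m -> int),
    (forall j, exists i, v j i <> 0) /\
    forall z, S z -> exists j, hyperplane (v j) (b j) z.

Definition box (k : nat) (c : pt k) (n : nat) : pt k -> Prop :=
  fun z => forall i, c i <= z i <= c i + n%:Z.

Definition contains_box (k : nat) (R : pt k -> Prop) (n : nat) : Prop :=
  exists c : pt k, forall z, box c n z -> R z.

(* Main.v *)
Require Import Defs.
From mathcomp Require Import all_boot all_order all_algebra.
From mathcomp Require Import lra zify.
Set Implicit Arguments. Unset Strict Implicit. Unset Printing Implicit Defensive.
Import Order.TTheory GRing.Theory Num.Theory.

Section Helpers.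
Local Open Scope ring_scope.
Section Interp.
Variable F : realFieldType.

Lemma exists_max (I : finType) (P : pred I) (f : I -> F) i0 :
  P i0 -> exists2 im, P im & forall i, P i -> f i <= f im.
Proof.
move=> Pi0; case: (arg_maxP f Pi0) => im Pim Hm.
by exists im => // i Pi; apply: Hm.
Qed.

Lemma exists_min (I : finType) (P : pred I) (f : I -> F) i0 :
  P i0 -> exists2 im, P im & forall i, P i -> f im <= f i.
Proof.
move=> Pi0; have [im Pim Hm] := exists_max (fun i => - f i) Pi0.
by exists im => // i /Hm; rewrite lerN2.
Qed.

Lemma interp (I : finType) (P Q : pred I) (l u : I -> F) :
  (forall i j, P i -> Q j -> l i < u j) ->
  exists t, (forall i, P i -> l i < t) /\ (forall j, Q j -> t < u j).
Proof.
move=> H.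
case: (pickP P) => [i0 Pi0|P0]; case: (pickP Q) => [j0 Qj0|Q0].
- have [im Pim Him] := exists_max l Pi0.
  have [jm Qjm Hjm] := exists_min u Qj0.
  have := H _ _ Pim Qjm => Hlt.
  exists ((l im + u jm) / 2); split.
  + by move=> i /Him Hi; lra.
  + by move=> j /Hjm Hj; lra.
- have [im Pim Him] := exists_max l Pi0.
  exists (l im + 1); split; last by move=> j; rewrite Q0.
  by move=> i /Him Hi; lra.
- have [jm Qjm Hjm] := exists_min u Qj0.
  exists (u jm - 1); split; first by move=> i; rewrite P0.
  by move=> j /Hjm Hj; lra.
- by exists 0; split => i; rewrite ?P0 ?Q0.
Qed.
End Interp.

Section FM.
Variable F : realFieldType.
Definition dotF k (v x : 'I_k -> F) := \sum_i v i * x i.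

Variables (k : nat) (I : finType) (v : I -> 'I_k.+1 -> F).
Definition aa j := v j ord0.
Definition vp j (i : 'I_k) := v j (lift ord0 i).
Definition cnd (p n : I) := (0 < aa p) && (aa n < 0).
Definition ww (idx : I + I * I) (i : 'I_k) : F :=
  match idx with
  | inl j => if aa j == 0 then vp j i else 0
  | inr pn => if cnd pn.1 pn.2 then - aa pn.2 * vp pn.1 i + aa pn.1 * vp pn.2 i else 0
  end.
Definition WW (idx : I + I * I) (i : 'I_k.+1) : F :=
  match idx with
  | inl j => if aa j == 0 then v j i else 0
  | inr pn => if cnd pn.1 pn.2 then - aa pn.2 * v pn.1 i + aa pn.1 * v pn.2 i else 0
  end.
Definition coef (idx : I + I * I) (j : I) : F :=
  match idx with
  | inl j' => if (aa j' == 0) && (j == j') then 1 else 0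
  | inr pn => if cnd pn.1 pn.2 then (if j == pn.1 then - aa pn.2 else 0) + (if j == pn.2 then aa pn.1 else 0) else 0
  end.

Lemma sum_ind (c : F) (j0 : I) (f : I -> F) :
  \sum_j (if j == j0 then c else 0) * f j = c * f j0.
Proof.
rewrite (bigD1 j0) //= eqxx big1 ?addr0 // => j /negbTE ->; by rewrite mul0r.
Qed.

Lemma coefW idx i : \sum_j coef idx j * v j i = WW idx i.
Proof.
case: idx => [j'|[p n]] /=.
  case: eqP => _ /=; last by rewrite big1 // => j _; rewrite mul0r.
  by rewrite sum_ind mul1r.
case: ifP => _; last by rewrite big1 // => j _; rewrite mul0r.
under eq_bigr => j _ do rewrite mulrDl.
by rewrite big_split /= !sum_ind.
Qed.

Lemma WW0 idx : WW idx ord0 = 0.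
Proof.
case: idx => [j|[p n]] /=; first by case: eqP.
case: ifP => // _; rewrite /aa /=; lra.
Qed.

Lemma coef_ge0 idx j : 0 <= coef idx j.
Proof.
case: idx => [j'|[p n]] /=; first by case: ifP.
rewrite /cnd; case: andP => // -[Hp Hn].
apply: addr_ge0; case: ifP => // _; lra.
Qed.

Lemma dot_split (x : 'I_k -> F) t j :
  dotF (v j) (fun i => if unlift ord0 i is Some i' then x i' else t) =
  aa j * t + dotF (vp j) x.
Proof.
rewrite /dotF big_ord_recl unlift_none; congr (_ + _).
by apply: eq_bigr => i _; rewrite liftK.
Qed.

Lemma nz_split j : (exists i, v j i != 0) -> aa j != 0 \/ exists i, vp j i != 0.
Proof.
move=> [i Hi]; case: (unliftP ord0 i) Hi => [i' ->|->] Hi; first by right; exists i'.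
by left.
Qed.


End FM.
Section FM2.
Variable F : realFieldType.
Lemma dot_ww_inr (k : nat) (I : finType) (v : I -> 'I_k.+1 -> F) p n x :
  cnd v p n ->
  dotF (ww v (inr (p, n))) x = - aa v n * dotF (vp v p) x + aa v p * dotF (vp v n) x.
Proof.
move=> Hc; rewrite /dotF /ww /= Hc !mulr_sumr -big_split /=; apply: eq_bigr => i _.
by rewrite mulrDl !mulrA.
Qed.

Lemma aux1 (A B D1 D2 : F) : 0 < A -> 0 < B -> 0 < B * D1 + A * D2 -> - D1 / A < D2 / B.
Proof.
move=> HA HB H.
have e1 : D1 = (D1 / A) * A by rewrite divfK // gt_eqF.
have e2 : D2 = (D2 / B) * B by rewrite divfK // gt_eqF.
rewrite mulNr; move: (D1 / A) (D2 / B) e1 e2 => y1 y2 e1 e2.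
rewrite e1 e2 in H; have HAB : 0 < A * B by apply: mulr_gt0.
nra.
Qed.

Lemma aux2 (A D t : F) : 0 < A -> - D / A < t -> 0 < A * t + D.
Proof.
move=> HA; have e : D = (D / A) * A by rewrite divfK // gt_eqF.
rewrite mulNr; move: (D / A) e => y e H; rewrite e; nra.
Qed.

Lemma aux3 (A D t : F) : A < 0 -> t < D / (- A) -> 0 < A * t + D.
Proof.
move=> HA; have e : D = (D / (- A)) * (- A) by rewrite divfK // lt0r_neq0 // oppr_gt0.
move: (D / (- A)) e => y e H; rewrite e; nra.
Qed.

Lemma gordan k : forall (I : finType) (v : I -> 'I_k -> F),
  (exists x, forall j, (exists i, v j i != 0) -> 0 < dotF (v j) x) \/
  (exists lam : I -> F, (forall j, 0 <= lam j) /\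
     (forall i, \sum_j lam j * v j i = 0) /\
     exists j, 0 < lam j /\ exists i, v j i != 0).
Proof.
elim: k => [|k IH] I v.
  by left; exists (fun _ => 0) => j [i _]; case: i.
have WWlift idx i : WW v idx (lift ord0 i) = ww v idx i by case: idx => [?|[??]].
case: (IH _ (ww v)) => [[x Hx]|[mu [Hmu0 [Hmu [idx0 [Hmu1 [i0 Hi0]]]]]]].
- case: (boolP [exists pn : I * I, cnd v pn.1 pn.2 && [forall i, ww v (inr pn) i == 0]]).
    move/existsP => [[p n] /andP [Hc /forallP Hz]] /=.
    right; exists (coef v (inr (p, n))); split; first exact: coef_ge0.
    split.
      move=> i; rewrite coefW; case: (unliftP ord0 i) => [i' ->|->]; last exact: WW0.
      by rewrite WWlift; apply/eqP; exact: Hz.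
    have /andP [Hp Hn] := Hc.
    exists p; split; last by exists ord0; rewrite -/(aa v p) gt_eqF.
    rewrite /= Hc eqxx; case: eqP => [E|_]; first by move: Hn; rewrite -E; lra.
    lra.
  rewrite negb_exists => /forallP Hnz.
  have Hpair p n : cnd v p n -> 0 < - aa v n * dotF (vp v p) x + aa v p * dotF (vp v n) x.
    move=> Hc; rewrite -dot_ww_inr //; apply: Hx.
    move: (Hnz (p, n)); rewrite /= Hc /= negb_forall => /existsP [i Hi].
    by exists i.
  have Hlu p n : 0 < aa v p -> aa v n < 0 ->
      - dotF (vp v p) x / aa v p < dotF (vp v n) x / (- aa v n).
    move=> Hp Hn; apply: aux1 => //; first by rewrite oppr_gt0.
    by apply: Hpair; rewrite /cnd Hp Hn.
  have [t [Ht1 Ht2]] := @interp F I (fun j => 0 < aa v j) (fun j => aa v j < 0)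
      (fun p => - dotF (vp v p) x / aa v p) (fun n => dotF (vp v n) x / (- aa v n))
      Hlu.
  left; exists (fun i => if unlift ord0 i is Some i' then x i' else t) => j Hj.
  rewrite dot_split; case: (ltgtP (aa v j) 0) => Ha.
  - by apply: aux3 => //; exact: Ht2.
  - by apply: aux2 => //; exact: Ht1.
  - rewrite Ha mul0r add0r; move: (Hx (inl j)); rewrite /dotF /ww /= Ha eqxx; apply.
    by case: (nz_split Hj) => [|//]; rewrite Ha eqxx.
-
  right; exists (fun j => \sum_idx mu idx * coef v idx j); split.
    move=> j; apply: sumr_ge0 => idx _; apply: mulr_ge0 => //; exact: coef_ge0.
  split.
    move=> i; under eq_bigr => j _ do rewrite mulr_suml.
    rewrite exchange_big /=.
    apply: eq_trans (_ : \sum_idx mu idx * WW v idx i = 0).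
      apply: eq_bigr => idx _; rewrite -coefW mulr_sumr; apply: eq_bigr => j _.
      by rewrite mulrA.
    case: (unliftP ord0 i) => [i' ->|->].
      by apply: eq_trans (Hmu i'); apply: eq_bigr => idx _; rewrite WWlift.
    by rewrite big1 // => idx _; rewrite WW0 mulr0.
  case: idx0 Hmu1 Hi0 => [j|[p n]] Hmu1 Hi0.
  - move: Hi0; rewrite /ww /=; case: (aa v j =P 0) => Ha Hi0; last by rewrite eqxx in Hi0.
    exists j; split; last by exists (lift ord0 i0).
    rewrite (bigD1 (inl j)) //= Ha !eqxx /= mulr1.
    apply: (lt_le_trans Hmu1); rewrite lerDl; apply: sumr_ge0 => idx _.
    by apply: mulr_ge0 => //; exact: coef_ge0.
  - move: Hi0; rewrite /ww /=; case: ifP => Hc Hi0; last by rewrite eqxx in Hi0.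
    have /andP [Hp Hn] := Hc.
    exists p; split; last by exists ord0; rewrite -/(aa v p) gt_eqF.
    rewrite (bigD1 (inr (p, n))) //= {1}/coef /= Hc eqxx.
    case: eqP => [E|_]; first by move: Hn; rewrite -E; lra.
    rewrite addr0; apply: (@lt_le_trans _ _ (mu (inr (p, n)) * - aa v n)).
      by apply: mulr_gt0 => //; rewrite oppr_gt0.
    rewrite lerDl; apply: sumr_ge0 => idx _.
    by apply: mulr_ge0 => //; exact: coef_ge0.
Qed.

End FM2.

Lemma clear_den k (x : 'I_k -> rat) :
  exists (y : 'I_k -> int) (d : rat), 0 < d /\ forall i, (y i)%:~R = d * x i.
Proof.
exists (fun i => numq (x i) * \prod_(l | l != i) denq (x l)).
exists ((\prod_i denq (x i))%:~R); split.
  by rewrite ltr0z; apply: prodr_gt0 => i _; exact: denq_gt0.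
move=> i /=; rewrite (@intrM rat) numqE [in RHS](bigD1 i) //= (@intrM rat).
by rewrite -mulrA mulrC.
Qed.

Lemma dot_cast k (w y : 'I_k -> int) (d : rat) (x : 'I_k -> rat) :
  (forall i, (y i)%:~R = d * x i) ->
  (dotz w y)%:~R = d * dotF (fun i => (w i)%:~R) x.
Proof.
move=> Hy; rewrite /dotz /dotF rmorph_sum mulr_sumr; apply: eq_bigr => i _.
by rewrite rmorphM /= Hy mulrCA.
Qed.

Lemma dot_lower k (u w : 'I_k -> int) (n : nat) :
  (forall i, 0 <= w i <= n%:Z) -> - (n%:Z * \sum_i `|u i|) <= dotz u w.
Proof.
move=> Hw; rewrite /dotz mulr_sumr -sumrN; apply: ler_sum => i _.
have /andP [H0 Hn] := Hw i.
have h : `|u i * w i| <= n%:Z * `|u i|.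
  by rewrite normrM (ger0_norm H0) [_ * w i]mulrC ler_wpM2r.
by move: h; rewrite ler_norml => /andP [].
Qed.

Lemma dotzD k (u a c : 'I_k -> int) (T : int) :
  dotz u (fun i => T * c i + a i) = T * dotz u c + dotz u a.
Proof.
rewrite /dotz mulr_sumr -big_split; apply: eq_bigr => i _ /=.
by rewrite mulrDr mulrCA.
Qed.

Lemma le_sum_term (I : finType) (f : I -> int) j :
  (forall i, 0 <= f i) -> f j <= \sum_i f i.
Proof.
move=> H; rewrite (bigD1 j) //= lerDl; apply: sumr_ge0 => i _; exact: H.
Qed.

End Helpers.

Theorem lemmaB21 (k : nat) (R : pt k -> Prop) :
  polyhedral R ->
  (forall n : nat, contains_box R n) \/ measure_zero R.
Proof.
case => [HT|[m [v [b HR]]]].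
  by left => n; exists (fun _ => 0%R) => z _; exact: HT.
case: (boolP [exists j, [forall i, v j i == 0%R] && (0 <= b j)%R]).
  move/existsP => [j /andP [/forallP Hz Hb]].
  right; exists 0%N, (fun _ _ => 0%R), (fun _ => 0%R); split; first by case.
  move=> z /HR /(_ j); rewrite /halfspace /dotz big1 => [H|i _].
    by exfalso; move: Hb H; rewrite leNgt => /negP.
  by rewrite (eqP (Hz i)) mul0r.
rewrite negb_exists => /forallP Hnz.
pose vq := fun j i => ((v j i)%:~R : rat).
case: (gordan vq) => [[x Hx]|[lam [Hl0 [Hl [j0 [Hlj [i0 Hi0]]]]]]].
- left => n.
  have [y [d [Hd Hy]]] := clear_den x.
  pose T : int := (1 + \sum_j (`|b j| + n%:Z * \sum_i `|v j i|))%R.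
  exists (fun i => T * y i)%R => z Hz; apply/HR => j.
  rewrite /halfspace.
  have -> : dotz (v j) z = dotz (v j) (fun i => T * y i + (z i - T * y i))%R.
    by apply: eq_bigr => i _; rewrite addrC subrK.
  rewrite dotzD.
  case: (boolP [forall i, v j i == 0%R]) => [/forallP H0|Hnz0].
    have Hb : (b j < 0)%R.
      move: (Hnz j); have -> : [forall i, v j i == 0%R] by apply/forallP.
      by rewrite /= ltNge.
    rewrite /dotz.
    rewrite !big1 ?mulr0 ?addr0 // => i _; by rewrite (eqP (H0 i)) mul0r.
  have Hpos : (0 < dotz (v j) y)%R.
    rewrite -(ltr0z rat) (dot_cast _ Hy) mulr_gt0 //; apply: Hx.
    move: Hnz0; rewrite negb_forall => /existsP [i Hi]; exists i.
    by rewrite /vq intr_eq0.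
  have Hlow := @dot_lower k (v j) (fun i => z i - T * y i)%R n.
  have Hbox : forall i, (0 <= z i - T * y i <= n%:Z)%R.
    move=> i; have /andP [h1 h2] := Hz i; apply/andP; split.
      by rewrite subr_ge0.
    by rewrite lerBlDl.
  have {Hlow} Hlow := Hlow Hbox.
  have HT : (`|b j| + n%:Z * \sum_i `|v j i| <= T - 1)%R.
    have -> : (T - 1 = \sum_j (`|b j| + n%:Z * \sum_i `|v j i|))%R by rewrite /T; lia.
    apply: (@le_sum_term _ (fun j => `|b j| + n%:Z * \sum_i `|v j i|)%R).
    move=> i; apply: addr_ge0 => //; apply: mulr_ge0 => //; exact: sumr_ge0.
  have Hbj : (b j <= `|b j|)%R by exact: ler_norm.
  have HT1 : (T <= T * dotz (v j) y)%R.
    have H1 : (1 <= dotz (v j) y)%R by [].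
    have T0 : (0 <= T)%R.
      apply: le_trans (_ : 1 <= T)%R => //; move: HT; set s := (_ + _)%R.
      have : (0 <= s)%R.
        apply: addr_ge0 => //; apply: mulr_ge0 => //; exact: sumr_ge0.
      lia.
    by rewrite -{1}(mulr1 T) ler_wpM2l.
  move: (\sum_i _)%R HT Hlow => S HT Hlow.
  move: (dotz _ _) Hlow => D Hlow; lia.
- right.
  have Hv0 : exists i, v j0 i <> 0%R.
    by exists i0; apply/eqP; move: Hi0; rewrite /vq intr_eq0.
  pose Q : rat := (- \sum_(j | j != j0) lam j * (b j)%:~R)%R.
  pose lo : int := (b j0 + 1)%R.
  pose N : int := Num.ceil (`|Q| / lam j0)%R.
  have Hup : forall z, R z -> (dotz (v j0) z <= N)%R.
    move=> z /HR Hz.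
    have Hsum : (\sum_j lam j * (dotz (v j) z)%:~R = 0)%R.
      under eq_bigr => j _ do rewrite /dotz rmorph_sum mulr_sumr.
      rewrite exchange_big /=.
      rewrite big1 // => i _.
      under eq_bigr => j _ do rewrite intrM mulrA.
      by rewrite -mulr_suml Hl mul0r.
    move: Hsum; rewrite (bigD1 j0) //= => Hsum.
    have HQ : (lam j0 * (dotz (v j0) z)%:~R <= Q)%R.
      have -> : (lam j0 * (dotz (v j0) z)%:~R =
         - \sum_(j | j != j0) lam j * (dotz (v j) z)%:~R)%R.
        by apply/eqP; rewrite -addr_eq0 Hsum.
      rewrite lerN2; apply: ler_sum => j _; apply: ler_wpM2l => //.
      by rewrite ler_int; apply: ltW; exact: Hz.
    rewrite -(ler_int rat); apply: le_trans (ceil_ge _).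
    rewrite ler_pdivlMr // mulrC; apply: le_trans HQ _; exact: ler_norm.
  have Hlo : forall z, R z -> (lo <= dotz (v j0) z)%R.
    by move=> z /HR /(_ j0); rewrite /halfspace /lo => H; lia.
  exists (absz (N - lo)).+1, (fun _ => v j0), (fun j => lo + (nat_of_ord j)%:Z)%R.
  split; first by move=> _.
  move=> z Rz; have h1 := Hup z Rz; have h2 := Hlo z Rz.
  have Hlt : (absz (dotz (v j0) z - lo) < (absz (N - lo)).+1)%N by lia.
  exists (Ordinal Hlt); rewrite /hyperplane /=; lia.
Qed.
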